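(* Let $\mathrm{A}$ be a real symmetric positive definite $d\times d$ matrix which is admissible with some parameter $\tau>0$. Then for every $a=(a_n)_{n\in\mathbb{Z}^d}\in\ell^{2}(\mathbb{Z}^{d})$, \[ \sum_{\vec{n}=(n_{1},n_{2},n_{3},n)\in\Gamma_{0}}a_{n_{1}}\overline{a_{n_{2}}}a_{n_{3}}\overline{a_{n}}=2\Big(\sum_{n\in\mathbb{Z}^{d}}|a_{n}|^{2}\Big)^{2}-\sum_{n\in\mathbb{Z}^{d}}|a_{n}|^{4}, \] where $\Gamma_{0}=\{\vec n\in(\mathbb{Z}^{d})^{4}: n_{1}-n_{2}+n_{3}-n=0,\ \Omega(\vec n)=0\}$.
   Context: $\lambda_{n}^{2}=n^{\intercal}\mathrm{A}n$ for $n\in\mathbb{Z}^d$, $|n|$ Euclidean norm; $\Omega(\vec{n})=\lambda_{n_{1}}^{2}-\lambda_{n_{2}}^{2}+\lambda_{n_{3}}^{2}-\lambda_{n}^{2}$. $\mathrm{A}$ is admissible with parameter $\tau>0$ if there is $c>0$ such that $|a^{\intercal}\mathrm{A}b|\geq c|a|^{-\tau}|b|^{-\tau}$ for all $a,b\in\mathbb{Z}^{d}\setminus\{0\}$. *)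

(* Defs.v *)
From mathcomp Require Import all_boot all_order all_algebra.
From mathcomp Require Import all_classical all_reals all_analysis.
From mathcomp Require Import finmap.
From mathcomp.real_closed Require Import complex.
Set Implicit Arguments. Unset Strict Implicit. Unset Printing Implicit Defensive.
Import Order.TTheory GRing.Theory Num.Theory.
Local Open Scope ring_scope.
Local Open Scope classical_set_scope.
Local Open Scope fset_scope.
Local Open Scope classical_set_scope.

Definition zvec (d : nat) := 'rV[int]_d.

Definition zr (R : realType) (d : nat) (n : zvec d) : 'rV[R]_d :=
  map_mx (fun x : int => x%:~R) n.

Definition enorm (R : realType) (d : nat) (v : 'rV[R]_d) : R :=
  Num.sqrt (\sum_(i < d) v 0 i ^+ 2).

Definition bform (R : realType) (d : nat) (A : 'M[R]_d) (a b : 'rV[R]_d) : R :=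
  (a *m A *m b^T) 0 0.

Definition sym_pos_def (R : realType) (d : nat) (A : 'M[R]_d) : Prop :=
  A^T = A /\ (forall v : 'rV[R]_d, v != 0 -> 0 < bform A v v).

Definition admissible (R : realType) (d : nat) (A : 'M[R]_d) (tau : R) : Prop :=
  exists c : R, 0 < c /\
    forall a b : zvec d, a != 0 -> b != 0 ->
      c * powR (enorm (zr R a)) (- tau) * powR (enorm (zr R b)) (- tau)
        <= `| bform A (zr R a) (zr R b) |.

Definition lam2 (R : realType) (d : nat) (A : 'M[R]_d) (n : zvec d) : R :=
  bform A (zr R n) (zr R n).

Definition Omega (R : realType) (d : nat) (A : 'M[R]_d) (n1 n2 n3 n : zvec d) : R :=
  lam2 A n1 - lam2 A n2 + lam2 A n3 - lam2 A n.

Definition quad (d : nat) := (zvec d * zvec d * zvec d * zvec d)%type.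

Definition Gamma0 (R : realType) (d : nat) (A : 'M[R]_d) : set (quad d) :=
  [set x | let: (n1, n2, n3, n) := x in
           n1 - n2 + n3 - n = 0 /\ Omega A n1 n2 n3 n = 0].

Definition cabs (R : realType) (z : R[i]) : R := Normc.normc z.

Definition in_l2 (R : realType) (d : nat) (a : zvec d -> R[i]) : Prop :=
  summable [set: zvec d] (fun n => ((cabs (a n)) ^+ 2)%:E).

(* sum_{n in Z^d} |a_n|^p (p = 2, 4), a real number when finite *)
Definition lpow_sum (R : realType) (d : nat) (a : zvec d -> R[i]) (p : nat) : R :=
  fine (\esum_(n in [set: zvec d]) ((cabs (a n)) ^+ p)%:E)%E.

(* unordered summation of a complex family over a (countable) index set S:
   the net of finite partial sums over finite subsets of S converges to L *)
Definition has_usum (T : choiceType) (R : realType) (S : set T)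
    (f : T -> R[i]) (L : R[i]) : Prop :=
  forall eps : R, 0 < eps ->
    exists F0 : {fset T}, [set` F0] `<=` S /\
      forall F : {fset T}, [set` F0] `<=` [set` F] -> [set` F] `<=` S ->
        cabs (\sum_(x <- F) f x - L) < eps.

(* Main.v *)
Set Warnings "-notation-overridden,-ambiguous-paths,-notation-incompatible-prefix".
Require Import Defs.
From mathcomp Require Import all_boot all_order all_algebra.
From mathcomp Require Import all_classical all_reals all_analysis.
From mathcomp.real_closed Require Import complex.
From mathcomp Require Import finmap.
From mathcomp Require Import ring lra.
Import Order.TTheory GRing.Theory Num.Theory.
Local Open Scope ring_scope.
Local Open Scope complex_scope.
Section PartA.
Variables (R : realType) (d : nat) (A : 'M[R]_d).

Lemma zrD (u v : zvec d) : zr R (u + v) = zr R u + zr R v.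
Proof. by apply/matrixP => i j; rewrite !mxE intrD. Qed.

Lemma bformDl (x y z : 'rV[R]_d) : bform A (x + y) z = bform A x z + bform A y z.
Proof. by rewrite /bform !mulmxDl mxE. Qed.

Lemma bformDr (x y z : 'rV[R]_d) : bform A x (y + z) = bform A x y + bform A x z.
Proof. by rewrite /bform linearD /= mulmxDr mxE. Qed.

Lemma bformC (x y : 'rV[R]_d) : A^T = A -> bform A x y = bform A y x.
Proof.
move=> hA; rewrite /bform.
have -> : forall M : 'M[R]_1, M 0 0 = M^T 0 0 by move=> M; rewrite mxE.
by rewrite !trmx_mul trmxK hA mulmxA.
Qed.

Lemma omega_expand (X U V : 'rV[R]_d) : A^T = A ->
  bform A (X + U) (X + U) - bform A X X + bform A (X + V) (X + V)
  - bform A (X + U + V) (X + U + V) = - 2 * bform A U V.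
Proof.
move=> hA; rewrite !(bformDl, bformDr) (bformC X U hA) (bformC X V hA) (bformC V U hA).
lra.
Qed.

End PartA.
Section PartA2.
Variables (R : realType) (d : nat) (A : 'M[R]_d).

Lemma enorm_gt0 (u : zvec d) : u != 0 -> 0 < enorm (zr R u).
Proof.
move=> hu; have [i hi] : exists i, u 0 i != 0.
  apply/existsP; apply: contraNT hu => /existsPn H; apply/eqP/rowP => i.
  by rewrite mxE; have := H i; rewrite negbK => /eqP.
rewrite /enorm sqrtr_gt0 (bigD1 i) //=.
apply: (@lt_le_trans _ _ ((zr R u 0 i) ^+ 2)).
  by rewrite lt_def sqr_ge0 andbT sqrf_eq0 /zr mxE intr_eq0.
by rewrite lerDl sumr_ge0 // => j _; rewrite sqr_ge0.
Qed.

Lemma classify (tau : R) : A^T = A -> 0 < tau -> admissible A tau ->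
  forall n1 n2 n3 n : zvec d, Gamma0 A (n1, n2, n3, n) ->
  (n1 = n2 /\ n3 = n) \/ (n1 = n /\ n2 = n3).
Proof.
move=> hA htau [c [c0 hc]] n1 n2 n3 n [h1 h2].
have hn : n = n1 - n2 + n3 by apply/esym/subr0_eq.
have e1 : zr R n1 = zr R n2 + zr R (n1 - n2) by rewrite -zrD addrC subrK.
have e3 : zr R n3 = zr R n2 + zr R (n3 - n2) by rewrite -zrD addrC subrK.
have en : zr R n = zr R n2 + zr R (n1 - n2) + zr R (n3 - n2).
  rewrite -!zrD hn [n2 + _]addrC subrK [n3 - n2]addrC addrA //.
move: h2; rewrite /Omega /lam2 e1 e3 en omega_expand // => /eqP.
rewrite mulf_eq0 oppr_eq0 pnatr_eq0 /= => /eqP hB.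
have [u0|u0] := eqVneq (n1 - n2) 0.
  left; have e : n1 = n2 by apply: subr0_eq.
  by split => //; rewrite hn e subrr add0r.
have [v0|v0] := eqVneq (n3 - n2) 0.
  right; have e : n3 = n2 by apply: subr0_eq.
  by split => //; rewrite hn e subrK.
have := hc (n1 - n2) (n3 - n2) u0 v0; rewrite hB normr0.
have p1 := powR_gt0 (- tau) (enorm_gt0 (n1 - n2) u0).
have p2 := powR_gt0 (- tau) (enorm_gt0 (n3 - n2) v0).
have : 0 < c * powR (enorm (zr R (n1 - n2))) (- tau) * powR (enorm (zr R (n3 - n2))) (- tau).
  by rewrite !mulr_gt0.
move=> H1 H2; have := lt_le_trans H1 H2; by rewrite ltxx.
Qed.

End PartA2.
Section PartC.
Variables (R : realType) (d : nat) (b : zvec d -> R).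
Hypothesis b0 : forall n, 0 <= b n.

Lemma sub_sum (T : eqType) (s t : seq T) (F : T -> R) :
  uniq s -> uniq t -> {subset s <= t} -> (forall x, 0 <= F x) ->
  \sum_(x <- s) F x <= \sum_(x <- t) F x.
Proof.
move=> us ut st F0; rewrite [X in _ <= X](bigID (fun x => x \in s)) /=.
have -> : \sum_(x <- t | x \in s) F x = \sum_(x <- s) F x.
  rewrite -big_filter; apply: perm_big; apply: uniq_perm.
  - exact: filter_uniq.
  - exact: us.
  by move=> x; rewrite mem_filter; case: (boolP (x \in s)) => // /st ->.
by rewrite lerDl sumr_ge0.
Qed.

Definition ssum (K : seq (zvec d)) := \sum_(p <- K) b p.
Definition qsum (K : seq (zvec d)) := \sum_(p <- K) b p ^+ 2.

Definition gq (x : quad d) : R :=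
  let: (n1, n2, n3, n) := x in if n1 == n2 then b n1 * b n3 else b n1 * b n2.

Lemma gq_ge0 x : 0 <= gq x.
Proof. by case: x => [[[n1 n2] n3] n] /=; case: ifP => _; rewrite mulr_ge0. Qed.

Definition s0a (K : seq (zvec d)) : seq (quad d) := [seq (p, p, q, q) | p <- K, q <- K].
Definition s0b (K : seq (zvec d)) : seq (quad d) :=
  [seq x <- [seq (p, q, q, p) | p <- K, q <- K] | x.1.1.1 != x.1.1.2].
Definition s0 K := s0a K ++ s0b K.

Lemma s0_uniq K : uniq K -> uniq (s0 K).
Proof.
move=> uK; rewrite cat_uniq; apply/and3P; split.
- by apply: allpairs_uniq => // -[p q] [p' q'] _ _ /= => e; case: e => *; subst.
- apply/hasPn => x; rewrite mem_filter => /andP[hx _].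
  apply/negP => /allpairsP [[p q] [_ _ ex]]; move: hx; by rewrite ex /= eqxx.
- by apply: filter_uniq; apply: allpairs_uniq => // -[p q] [p' q'] _ _ /= => e; case: e => *; subst.
Qed.

Lemma s0_val K : uniq K -> \sum_(x <- s0 K) gq x = 2 * ssum K ^+ 2 - qsum K.
Proof.
move=> uK; rewrite big_cat /s0a /s0b.
rewrite (big_allpairs_dep (h := fun (p q : zvec d) => (p, p, q, q) : quad d)) /=.
rewrite big_filter [X in _ + X]big_mkcond [X in _ + X](big_allpairs_dep (h := fun (p q : zvec d) => (p, q, q, p) : quad d)) /=.
have -> : \sum_(i <- K) \sum_(i0 <- K) (if i == i then b i * b i0 else b i * b i) =
          \sum_(i <- K) b i * ssum K.
  by apply: eq_bigr => i _; rewrite eqxx mulr_sumr.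
have -> : \sum_(i <- K) \sum_(i0 <- K)
     (if i != i0 then (if i == i0 then b i * b i0 else b i * b i0) else 0) =
   \sum_(i <- K) (b i * ssum K - b i ^+ 2).
  rewrite big_seq [RHS]big_seq; apply: eq_bigr => i iK.
  rewrite /ssum [in RHS](bigD1_seq i) //= mulrDr expr2 addrAC subrr add0r mulr_sumr.
  rewrite [in RHS]big_mkcond; apply: eq_bigr => j _.
  by case: (eqVneq i j).
by rewrite sumrB -mulr_suml /qsum; rewrite -/(ssum K) expr2; lra.
Qed.

Lemma s0_mono K K' : uniq K -> uniq K' -> {subset K <= K'} ->
  \sum_(x <- s0 K) gq x <= \sum_(x <- s0 K') gq x.
Proof.
move=> uK uK' KK'; apply: sub_sum; [exact: s0_uniq | exact: s0_uniq | | exact: gq_ge0].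
move=> x; rewrite !mem_cat !mem_filter => /orP[].
  move=> /allpairsP [[p q] [/= hp hq ->]]; apply/orP; left.
  by apply/allpairsP; exists (p, q); split => //; apply: KK'.
move=> /andP[h /allpairsP [[p q] [/= hp hq ex]]]; apply/orP; right.
by rewrite h /=; apply/allpairsP; exists (p, q); split => //; apply: KK'.
Qed.

End PartC.
Arguments ssum {R d}. Arguments qsum {R d}. Arguments gq {R d}.
Arguments s0a {d}. Arguments s0b {d}. Arguments s0 {d}.
Arguments sub_sum {R T}. Arguments s0_val {R d}. Arguments s0_mono {R d}.
Arguments s0_uniq {d}.
Section PartC2.
Variables (R : realType) (d : nat) (b : zvec d -> R).
Hypothesis b0 : forall n, 0 <= b n.

Lemma ssum_ge0 K : 0 <= ssum b K.
Proof. by rewrite sumr_ge0. Qed.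

Lemma qsum_le K : qsum b K <= ssum b K ^+ 2.
Proof.
rewrite /qsum /ssum; elim: K => [|x K IH]; first by rewrite !big_nil expr0n.
rewrite !big_cons.
have hs : 0 <= \sum_(j <- K) b j by rewrite sumr_ge0.
have hb := b0 x.
move: IH hs hb; move: (\sum_(j <- K) b j ^+ 2) (\sum_(j <- K) b j) (b x) => q s y.
nra.
Qed.

Lemma cover (F : seq (quad d)) (K : seq (zvec d)) :
  (forall n1 n2 n3 n, (n1, n2, n3, n) \in F ->
    ((n1 = n2 /\ n3 = n) \/ (n1 = n /\ n2 = n3)) /\
    [/\ n1 \in K, n2 \in K & n3 \in K]) ->
  {subset F <= s0 K}.
Proof.
move=> H [[[n1 n2] n3] n] hx; have [hc [k1 k2 k3]] := H _ _ _ _ hx.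
rewrite mem_cat; apply/orP.
have [eq12|ne] := eqVneq n1 n2.
  left; apply/allpairsP; exists (n1, n3); split => //=.
  case: hc => [[_ e3]|[e1 e2]]; first by rewrite -eq12 -e3.
  by rewrite -eq12 -e2 -e1 -eq12.
right; case: hc => [[e _]|[e1 e2]]; first by rewrite e eqxx in ne.
rewrite mem_filter /= ne /=; apply/allpairsP; exists (n1, n2); split => //=.
by rewrite -e1 -e2.
Qed.

End PartC2.
Section PartD.
Local Open Scope classical_set_scope.
Local Open Scope ereal_scope.
Variables (R : realType) (T : choiceType) (h : T -> R).
Hypothesis h0 : forall x, (0 <= h x)%R.

Lemma esum_ub (K : seq T) : uniq K ->
  (\sum_(x <- K) h x)%:E <= \esum_(x in [set: T]) (h x)%:E.
Proof.
move=> uK; rewrite -sumEFin fsbig_seq //; apply: ereal_sup_ubound.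
by exists [set` K] => //; split => //; exact: finite_seq.
Qed.

Lemma esum_le (M : R) : (forall K : seq T, uniq K -> (\sum_(x <- K) h x <= M)%R) ->
  \esum_(x in [set: T]) (h x)%:E <= M%:E.
Proof.
move=> HM; apply: ge_ereal_sup => y [A [finA _] <-].
by rewrite fsbig_finite // sumEFin lee_fin HM // fset_uniq.
Qed.

Lemma esum_approx (S d : R) : \esum_(x in [set: T]) (h x)%:E = S%:E -> (0 < d)%R ->
  exists K : seq T, uniq K /\ (S - d < \sum_(x <- K) h x)%R.
Proof.
move=> ES d0; have : (S - d)%:E < \esum_(x in [set: T]) (h x)%:E.
  by rewrite ES lte_fin; lra.
move=> /ereal_sup_gt [y [A [finA _] <-]].
rewrite fsbig_finite // sumEFin lte_fin => H.
by exists (fset_set A); split => //; exact: fset_uniq.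
Qed.

End PartD.
Arguments classify {R d A tau}. Arguments esum_ub {R T h}. Arguments esum_le {R T h}. Arguments esum_approx {R T h S d}. Arguments qsum_le {R d b}. Arguments ssum_ge0 {R d b}. Arguments cover {d}.
Lemma cabsC (R : realType) (x : R) : cabs (x%:C) = `|x|.
Proof. by rewrite /cabs /= expr0n /= addr0 sqrtr_sqr. Qed.

Lemma mulcc (R : realType) (z : R[i]) : z * z^* = (cabs z ^+ 2)%:C.
Proof. by rewrite -sqr_normc rmorphXn. Qed.

Theorem lemma2p6 (R : realType) (d : nat) (A : 'M[R]_d) (tau : R) :
  sym_pos_def A -> 0 < tau -> admissible A tau ->
  forall a : zvec d -> R[i], in_l2 a ->
    has_usum (Gamma0 A)
      (fun x : quad d => let: (n1, n2, n3, n) := x in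
         a n1 * (a n2)^* * a n3 * (a n)^*)
      ((2 * (lpow_sum a 2) ^+ 2 - lpow_sum a 4)%:C).
Proof.
move=> [hA _] htau hadm a hl2.
pose b := fun n => cabs (a n) ^+ 2.
have b0 : forall n, 0 <= b n by move=> n; rewrite sqr_ge0.
have cls := classify hA htau hadm.
set S2 := lpow_sum a 2; set S4 := lpow_sum a 4.
have E2eq : \esum_(n in [set: zvec d]) (b n)%:E = S2%:E.
  rewrite /S2 /lpow_sum fineK // ge0_fin_numE; last first.
    by apply: esum_ge0 => x _; rewrite lee_fin sqr_ge0.
  move: hl2; rewrite /in_l2 /summable.
  suff -> : \esum_(x in [set: zvec d]) `|(cabs (a x) ^+ 2)%:E|%E =
            \esum_(x in [set: zvec d]) (b x)%:E by [].
  by apply: eq_esum => n _; rewrite abse_EFin ger0_norm // sqr_ge0.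
have hsK : forall K, uniq K -> ssum b K <= S2.
  by move=> K uK; rewrite -lee_fin -E2eq; apply: esum_ub.
have S2ge0 : 0 <= S2 by have := hsK [::] isT; rewrite /ssum big_nil.
have E4eq : \esum_(n in [set: zvec d]) (b n ^+ 2)%:E = S4%:E.
  have -> : \esum_(n in [set: zvec d]) (b n ^+ 2)%:E =
            \esum_(n in [set: zvec d]) (cabs (a n) ^+ 4)%:E.
    by apply: eq_esum => n _; rewrite /b -exprM.
  rewrite /S4 /lpow_sum fineK // ge0_fin_numE; last first.
    by apply: esum_ge0 => x _; rewrite lee_fin -[4%N]/(2 * 2)%N exprM sqr_ge0.
  apply: (le_lt_trans (y := (S2 ^+ 2)%:E)); last exact: ltry.
  have -> : \esum_(n in [set: zvec d]) (cabs (a n) ^+ 4)%:E =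
            \esum_(n in [set: zvec d]) (b n ^+ 2)%:E.
    by apply: eq_esum => n _; rewrite /b -exprM.
  apply: esum_le => K uK.
  have h1 := qsum_le b0 K; have h2 := hsK K uK; have h3 := ssum_ge0 b0 K.
  rewrite /qsum in h1; nra.
have hqK : forall K, uniq K -> qsum b K <= S4.
  move=> K uK; rewrite -lee_fin -E4eq; exact: esum_ub.
set L := 2 * S2 ^+ 2 - S4.
have UB : forall K, uniq K -> \sum_(x <- s0 K) gq b x <= L.
  move=> K uK; apply/ler_addgt0Pr => eta eta0.
  have [Kq [uKq Hq]] := esum_approx E4eq eta0.
  set K' := undup (K ++ Kq).
  have u' : uniq K' := undup_uniq _.
  have sub1 : {subset K <= K'} by move=> x hx; rewrite mem_undup mem_cat hx.
  have m := @s0_mono _ _ b b0 K K' uK u' sub1.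
  rewrite [X in _ <= X]s0_val // in m.
  have hq : qsum b Kq <= qsum b K'.
    apply: sub_sum => // [x hx|x]; last exact: sqr_ge0.
    by rewrite mem_undup mem_cat hx orbT.
  have h2 := hsK K' u'; have h3 := ssum_ge0 b0 K'.
  have h4 : ssum b K' ^+ 2 <= S2 ^+ 2 by nra.
  rewrite /qsum in hq m; rewrite /L; lra.
have LB : forall eps, 0 < eps -> exists K, uniq K /\ L - eps < \sum_(x <- s0 K) gq b x.
  move=> eps e0; set del := eps / (4 * S2 + 1).
  have den0 : 0 < 4 * S2 + 1 by lra.
  have del0 : 0 < del by rewrite divr_gt0.
  have hdel : del * (4 * S2 + 1) = eps by rewrite divfK // gt_eqF.
  have [K [uK HK]] := esum_approx E2eq del0.
  exists K; split => //; rewrite s0_val //.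
  have h1 := hsK K uK; have h2 := hqK K uK; have h3 := ssum_ge0 b0 K.
  rewrite /ssum in h1 h3.
  have P : (S2 - ssum b K) * (S2 + ssum b K) <= del * (2 * S2).
    apply: ler_pM; rewrite /ssum; lra.
  rewrite /L; nra.
move=> eps e0; have [K [uK HK]] := LB eps e0.
exists (seq_fset tt (s0 K)); split.
  move=> x hx; have : x \in s0 K by rewrite -(seq_fsetE tt (s0 K)); exact: hx.
  rewrite mem_cat => /orP[].
    move=> /allpairsP [[p q] [_ _ ->]] /=; split; first by rewrite subrr add0r subrr.
    by rewrite /Omega subrr add0r subrr.
  rewrite mem_filter => /andP[_ /allpairsP [[p q] [_ _ ->]]] /=; split.
    by rewrite subrK subrr.
  by rewrite /Omega subrK subrr.
move=> F hF0 hF.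
have uF : uniq F := fset_uniq F.
have hfg : \sum_(x <- F) (let: (n1, n2, n3, n) := x in a n1 * (a n2)^* * a n3 * (a n)^*)
         = (\sum_(x <- F) gq b x)%:C.
  rewrite rmorph_sum big_seq [RHS]big_seq; apply: eq_bigr => -[[[n1 n2] n3] n] hx.
  have := cls _ _ _ _ (hF _ hx) => -[[e1 e2]|[e1 e2]]; rewrite /gq -e1 -e2.
    by rewrite eqxx -mulrA !mulcc -rmorphM.
  rewrite if_same.
  have -> : a n1 * (a n2)^* * a n2 * (a n1)^* = (a n1 * (a n1)^*) * (a n2 * (a n2)^*) by ring.
  by rewrite !mulcc -rmorphM.
rewrite hfg -rmorphB cabsC.
set G := \sum_(x <- F) gq b x.
set K' := undup ([seq x.1.1.1 | x <- F] ++ [seq x.1.1.2 | x <- F] ++ [seq x.1.2 | x <- F]).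
have uK' : uniq K' := undup_uniq _.
have hG1 : G <= L.
  apply: le_trans (UB K' uK'); apply: sub_sum => //; [exact: s0_uniq | | exact: gq_ge0].
  apply: cover => n1 n2 n3 n hx; split; first exact: cls _ _ _ _ (hF _ hx).
  rewrite !mem_undup !mem_cat; split.
  - by rewrite (map_f (fun x : quad d => x.1.1.1) hx).
  - by rewrite (map_f (fun x : quad d => x.1.1.2) hx) orbT.
  - by rewrite (map_f (fun x : quad d => x.1.2) hx) !orbT.
have hG2 : \sum_(x <- s0 K) gq b x <= G.
  apply: sub_sum => //; [exact: s0_uniq | | exact: gq_ge0].
  move=> x hx; apply: hF0.
  by have : x \in seq_fset tt (s0 K) by rewrite (seq_fsetE tt (s0 K)).
rewrite ler0_norm ?subr_le0 //; lra.
Qed.
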